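(* Let $V$ be a real finite-dimensional inner product space and let $(g(x))_{x\ge0}$ be a semigroup on $V$ satisfying the boundedness assumption. Let $V=V_1\oplus V_2$ be a decomposition into $g$-invariant subspaces with $g(x)|_{V_1}$ invertible for all $x\ge0$ and $g(x)|_{V_2}=0$ for all $x>0$. Then $V_1\perp V_2$.
   Context: A semigroup is a map $g:[0,\infty)\to L(V)$ with $g(0)=\mathrm{id}$ and $g(x+y)=g(x)g(y)$ for all $x,y\ge0$. Boundedness assumption: there is a locally bounded function $f:[0,\infty)\to\mathbb R$, right-continuous at $0$, with $f(0)=1$, such that $\|g(x)\|_{\mathrm{op}}\le f(x)$ for all $x\ge0$, where $\|\cdot\|_{\mathrm{op}}$ is the operator norm induced by the inner product. *)

(* Defs.v *)
From HB Require Import structures.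
From mathcomp Require Import all_boot all_order all_algebra.
From mathcomp Require Import all_classical all_reals all_analysis.
Set Implicit Arguments. Unset Strict Implicit. Unset Printing Implicit Defensive.
Import Order.TTheory GRing.Theory Num.Theory numFieldNormedType.Exports.
Local Open Scope ring_scope.
Local Open Scope classical_set_scope.

(* V is modelled as the real vector space 'rV[R]_n (n = dim V) equipped with an
   ARBITRARY inner product ip; linear operators on V are matrices A : 'M_n
   acting by v |-> v *m A; subspaces are row spaces of matrices (mxalgebra). *)

Definition is_inner_product (R : realType) (n : nat)
  (ip : 'rV[R]_n -> 'rV[R]_n -> R) : Prop :=
  [/\ (forall u v, ip u v = ip v u),
      (forall a u v w, ip (a *: u + v) w = a * ip u w + ip v w),
      (forall v, 0 <= ip v v) &
      (forall v, ip v v = 0 -> v = 0)].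

Definition ipnorm (R : realType) (n : nat) (ip : 'rV[R]_n -> 'rV[R]_n -> R)
  (v : 'rV[R]_n) : R := Num.sqrt (ip v v).

Definition opnorm (R : realType) (n : nat) (ip : 'rV[R]_n -> 'rV[R]_n -> R)
  (A : 'M[R]_n) : R :=
  sup [set ipnorm ip (v *m A) | v in [set v : 'rV[R]_n | ipnorm ip v <= 1]].

Definition is_semigroup (R : realType) (n : nat) (g : R -> 'M[R]_n) : Prop :=
  g 0 = 1%:M /\ (forall x y, 0 <= x -> 0 <= y -> g (x + y) = g x *m g y).

Definition locally_bounded0 (R : realType) (f : R -> R) : Prop :=
  forall b, 0 <= b -> exists M : R, forall x, 0 <= x <= b -> `|f x| <= M.

Definition boundedness_assumption (R : realType) (n : nat)
  (ip : 'rV[R]_n -> 'rV[R]_n -> R) (g : R -> 'M[R]_n) : Prop :=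
  exists f : R -> R,
    [/\ locally_bounded0 f,
        f x @[x --> 0^'+] --> f 0,
        f 0 = 1 &
        forall x, 0 <= x -> opnorm ip (g x) <= f x].

(* Main.v *)
Require Import Defs.
From HB Require Import structures.
From mathcomp Require Import all_boot all_order all_algebra.
From mathcomp Require Import all_classical all_reals all_analysis.
From mathcomp Require Import ring lra.
Import Order.TTheory GRing.Theory Num.Theory numFieldNormedType.Exports.
Local Open Scope ring_scope.
Set Implicit Arguments. Unset Strict Implicit. Unset Printing Implicit Defensive.
Lemma ip0l (R : realType) n (ip : 'rV[R]_n -> 'rV[R]_n -> R) :
  is_inner_product ip -> forall w, ip 0 w = 0.
Proof.
case=> _ Hl _ _ w; have := Hl 1 0 0 w; rewrite scale1r addr0 mul1r.
by move=> H; apply: (@addrI _ (ip 0 w)); rewrite -H addr0.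
Qed.

Lemma ipDl (R : realType) n (ip : 'rV[R]_n -> 'rV[R]_n -> R) :
  is_inner_product ip -> forall u v w, ip (u + v) w = ip u w + ip v w.
Proof. by case=> _ Hl _ _ u v w; have := Hl 1 u v w; rewrite scale1r mul1r. Qed.

Lemma ipZl (R : realType) n (ip : 'rV[R]_n -> 'rV[R]_n -> R) :
  is_inner_product ip -> forall a u w, ip (a *: u) w = a * ip u w.
Proof.
move=> Hip a u w; have [_ Hl _ _] := Hip.
by have := Hl a u 0 w; rewrite addr0 ip0l // addr0.
Qed.

Lemma ipDr (R : realType) n (ip : 'rV[R]_n -> 'rV[R]_n -> R) :
  is_inner_product ip -> forall u v w, ip w (u + v) = ip w u + ip w v.
Proof. by move=> Hip u v w; have [S _ _ _] := Hip; rewrite !(S w) ipDl. Qed.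

Lemma ipZr (R : realType) n (ip : 'rV[R]_n -> 'rV[R]_n -> R) :
  is_inner_product ip -> forall a u w, ip w (a *: u) = a * ip w u.
Proof. by move=> Hip a u w; have [S _ _ _] := Hip; rewrite !(S w) ipZl. Qed.

Lemma ipNl (R : realType) n (ip : 'rV[R]_n -> 'rV[R]_n -> R) :
  is_inner_product ip -> forall u w, ip (- u) w = - ip u w.
Proof. by move=> Hip u w; rewrite -scaleN1r ipZl // mulN1r. Qed.

Lemma ipNr (R : realType) n (ip : 'rV[R]_n -> 'rV[R]_n -> R) :
  is_inner_product ip -> forall u w, ip w (- u) = - ip w u.
Proof. by move=> Hip u w; rewrite -scaleN1r ipZr // mulN1r. Qed.

Lemma ip_suml (R : realType) n (ip : 'rV[R]_n -> 'rV[R]_n -> R) :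
  is_inner_product ip -> forall (I : finType) (F : I -> 'rV[R]_n) w,
  ip (\sum_i F i) w = \sum_i ip (F i) w.
Proof.
move=> Hip I F w.
apply: (big_morph (fun u => ip u w)); [move=> x y; exact: ipDl | exact: ip0l].
Qed.

Lemma ip_sumr (R : realType) n (ip : 'rV[R]_n -> 'rV[R]_n -> R) :
  is_inner_product ip -> forall (I : finType) (F : I -> 'rV[R]_n) w,
  ip w (\sum_i F i) = \sum_i ip w (F i).
Proof.
move=> Hip I F w; have [S _ _ _] := Hip.
rewrite S ip_suml //; apply: eq_bigr => i _; exact: S.
Qed.

Lemma ip_CS (R : realType) n (ip : 'rV[R]_n -> 'rV[R]_n -> R) :
  is_inner_product ip -> forall u v, ip u v ^+ 2 <= ip u u * ip v v.
Proof.
move=> Hip u v; have [S _ P D] := Hip.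
have [v0|vn0] := eqVneq (ip v v) 0.
  by rewrite (D _ v0) (S u 0) !ip0l // expr0n /= mulr0.
have vp : 0 < ip v v by rewrite lt_def vn0 P.
set t := ip u v / ip v v.
have := P (u - t *: v).
rewrite ipDl // ipDr // ipDr // ipNl // ipNr // !ipZl // !ipZr // ipNl // ipZl //.
rewrite (S v u) /t => H.
rewrite -(@ler_pM2r _ (ip v v)^-1) ?invr_gt0 // mulrK ?unitf_gt0 //.
rewrite -subr_ge0; apply: le_trans H _; rewrite le_eqVlt; apply/orP; left.
apply/eqP; rewrite ipNr // ipZr //; field; exact: vn0.
Qed.

Lemma ipnorm_ge0 (R : realType) n (ip : 'rV[R]_n -> 'rV[R]_n -> R) u :
  0 <= ipnorm ip u.
Proof. exact: sqrtr_ge0. Qed.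

Lemma ipnorm_sq (R : realType) n (ip : 'rV[R]_n -> 'rV[R]_n -> R) :
  is_inner_product ip -> forall u, ipnorm ip u ^+ 2 = ip u u.
Proof. by case=> _ _ P _ u; rewrite sqr_sqrtr. Qed.

Lemma ipnorm_eq0 (R : realType) n (ip : 'rV[R]_n -> 'rV[R]_n -> R) :
  is_inner_product ip -> forall u, ipnorm ip u = 0 -> u = 0.
Proof.
move=> Hip u H; have [_ _ _ D] := Hip; apply: D.
by rewrite -ipnorm_sq // H expr0n.
Qed.

Lemma ipnorm0 (R : realType) n (ip : 'rV[R]_n -> 'rV[R]_n -> R) :
  is_inner_product ip -> ipnorm ip 0 = 0.
Proof. by move=> Hip; rewrite /ipnorm ip0l // sqrtr0. Qed.

Lemma ipnormZ (R : realType) n (ip : 'rV[R]_n -> 'rV[R]_n -> R) :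
  is_inner_product ip -> forall a u, ipnorm ip (a *: u) = `|a| * ipnorm ip u.
Proof.
move=> Hip a u; rewrite /ipnorm ipZl // ipZr // mulrA -expr2 sqrtrM ?sqr_ge0 //.
by rewrite sqrtr_sqr.
Qed.

Lemma ipnormN (R : realType) n (ip : 'rV[R]_n -> 'rV[R]_n -> R) :
  is_inner_product ip -> forall u, ipnorm ip (- u) = ipnorm ip u.
Proof. by move=> Hip u; rewrite -scaleN1r ipnormZ // normrN normr1 mul1r. Qed.

Lemma ip_le (R : realType) n (ip : 'rV[R]_n -> 'rV[R]_n -> R) :
  is_inner_product ip -> forall u v, `|ip u v| <= ipnorm ip u * ipnorm ip v.
Proof.
move=> Hip u v.
rewrite -(@ler_pXn2r _ 2) //; last by rewrite nnegrE mulr_ge0 // ipnorm_ge0.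
by rewrite exprMn !ipnorm_sq // real_normK ?num_real // ip_CS.
Qed.

Lemma ipnormD (R : realType) n (ip : 'rV[R]_n -> 'rV[R]_n -> R) :
  is_inner_product ip -> forall u v,
  ipnorm ip (u + v) <= ipnorm ip u + ipnorm ip v.
Proof.
move=> Hip u v.
rewrite -(@ler_pXn2r _ 2) //; last by rewrite nnegrE addr_ge0 // ipnorm_ge0.
  2: by rewrite nnegrE ipnorm_ge0.
have [S _ _ _] := Hip.
rewrite ipnorm_sq // ipDl // !ipDr // (S v u) sqrrD !ipnorm_sq //.
have := ip_le Hip u v; have := ler_norm (ip u v); lra.
Qed.

Lemma ipnorm_sum (R : realType) n (ip : 'rV[R]_n -> 'rV[R]_n -> R) :
  is_inner_product ip -> forall (I : finType) (F : I -> 'rV[R]_n),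
  ipnorm ip (\sum_i F i) <= \sum_i ipnorm ip (F i).
Proof.
move=> Hip I F.
elim/big_ind2: _ => [|x1 y1 x2 y2 H1 H2|i _]; first by rewrite ipnorm0.
  by apply: le_trans (ipnormD Hip _ _) _; exact: lerD.
done.
Qed.

Lemma ip_expand_l (R : realType) n (ip : 'rV[R]_n -> 'rV[R]_n -> R) :
  is_inner_product ip -> forall u w,
  ip u w = \sum_k u 0 k * ip 'e_k w.
Proof.
move=> Hip u w; rewrite {1}(row_sum_delta u) ip_suml //.
by apply: eq_bigr => k _; rewrite ipZl.
Qed.

Lemma ip_expand_r (R : realType) n (ip : 'rV[R]_n -> 'rV[R]_n -> R) :
  is_inner_product ip -> forall u w,
  ip w u = \sum_k u 0 k * ip w 'e_k.
Proof.
move=> Hip u w; rewrite {1}(row_sum_delta u) ip_sumr //.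
by apply: eq_bigr => k _; rewrite ipZr.
Qed.

Lemma le_sum_term (R : realType) (I : finType) (F : I -> R) k :
  (forall i, 0 <= F i) -> F k <= \sum_i F i.
Proof.
move=> H; rewrite (bigD1 k) //= lerDl; apply: sumr_ge0 => i _; exact: H.
Qed.

Lemma coord_bound (R : realType) n (ip : 'rV[R]_n -> 'rV[R]_n -> R) :
  is_inner_product ip -> exists c, 0 <= c /\
  forall (u : 'rV[R]_n) i, `|u 0 i| <= c * ipnorm ip u.
Proof.
move=> Hip.
pose G := \matrix_(i, j) ip ('e_i : 'rV[R]_n) 'e_j.
have C1 u j : (u *m G) 0 j = ip u 'e_j.
  by rewrite mxE ip_expand_l //; apply: eq_bigr => k _; rewrite mxE.
have GU : G \in unitmx.
  rewrite -row_free_unit; apply: inj_row_free => v vG.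
  have [_ _ _ D] := Hip; apply: D; rewrite ip_expand_r //.
  by apply: big1 => k _; rewrite -C1 vG mxE mulr0.
pose y k := \sum_j invmx G j k *: ('e_j : 'rV[R]_n).
exists (\sum_k ipnorm ip (y k)); split.
  by apply: sumr_ge0 => k _; exact: ipnorm_ge0.
move=> u k.
have -> : u 0 k = ip u (y k).
  rewrite -{1}(mulmxK GU u) mxE ip_sumr //; apply: eq_bigr => j _.
  by rewrite ipZr // C1 mulrC.
apply: le_trans (ip_le Hip _ _) _; rewrite mulrC ler_wpM2r ?ipnorm_ge0 //.
by apply: le_sum_term => i; exact: ipnorm_ge0.
Qed.

Lemma ipnorm_coord (R : realType) n (ip : 'rV[R]_n -> 'rV[R]_n -> R) :
  is_inner_product ip -> forall (u : 'rV[R]_n) r,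
  (forall i, `|u 0 i| <= r) ->
  ipnorm ip u <= r * \sum_i ipnorm ip ('e_i : 'rV[R]_n).
Proof.
move=> Hip u r Hr; rewrite {1}(row_sum_delta u).
apply: le_trans (ipnorm_sum Hip _) _; rewrite mulr_sumr; apply: ler_sum => i _.
by rewrite ipnormZ // ler_wpM2r ?ipnorm_ge0.
Qed.

Lemma op_bound (R : realType) n (ip : 'rV[R]_n -> 'rV[R]_n -> R) :
  is_inner_product ip -> forall (A : 'M[R]_n) (u : 'rV[R]_n),
  ipnorm ip (u *m A) <= opnorm ip A * ipnorm ip u.
Proof.
move=> Hip A u.
have [c [c0 Hc]] := coord_bound Hip.
have key : forall v : 'rV[R]_n, ipnorm ip v <= 1 -> ipnorm ip (v *m A) <= opnorm ip A.
  move=> v Hv; apply: sup_upper_bound; last by exists v.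
  split; first by exists (ipnorm ip (0 *m A)), 0; rewrite //= ipnorm0.
  exists (\sum_i c * ipnorm ip ('e_i *m A)) => _ [w Hw <-].
  rewrite {1}(row_sum_delta w) mulmx_suml.
  apply: le_trans (ipnorm_sum Hip _) _; apply: ler_sum => i _.
  rewrite -scalemxAl ipnormZ // ler_wpM2r ?ipnorm_ge0 //.
  apply: le_trans (Hc _ _) _; rewrite -[leRHS]mulr1; exact: ler_wpM2l.
have [->|un0] := eqVneq u 0.
  by rewrite mul0mx ipnorm0 // mulr0.
have a0 : 0 < ipnorm ip u.
  rewrite lt_def ipnorm_ge0 andbT; apply/eqP => /(ipnorm_eq0 Hip) /eqP.
  by rewrite (negbTE un0).
have := key ((ipnorm ip u)^-1 *: u).
rewrite -scalemxAl !ipnormZ // ger0_norm; last by rewrite invr_ge0 ipnorm_ge0.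
rewrite mulVf ?gt_eqF // lexx => /(_ isT); rewrite -(@ler_pM2r _ (ipnorm ip u)) //.
by rewrite mulrAC mulVf ?gt_eqF // mul1r.
Qed.

Local Open Scope classical_set_scope.
Lemma ball_rV (R : realType) n (p q : 'rV[R]_n) e :
  ball p e q -> forall i, `|p 0 i - q 0 i| < e.
Proof.
case=> _ H i; have := H 0 i. by rewrite /ball /=.
Qed.

Lemma compact_pair (R : realType) n (y : nat -> 'rV[R]_n) r rho :
  0 < rho -> (forall j i, `|y j 0 i| <= r) ->
  exists j0 j1, (j0 < j1)%N /\ forall i, `|y j0 0 i - y j1 0 i| < rho.
Proof.
move=> rho0 Hy.
pose S := [set v : 'rV[R]_n | forall i, `[- r, r] (v 0 i)].
have cS : compact S.
  by apply: (@rV_compact _ _ (fun=> `[- r, r]%classic)) => i; exact: segment_compact.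
have FS : (y @ \oo) S.
  exists 0%N => // j _ i /=; rewrite in_itv /= -ler_norml; exact: Hy.
have [p [_ clp]] := cS _ _ FS.
have Hc : forall N, exists j, (N <= j)%N /\ ball p (rho / 2) (y j).
  move=> N; have r2 : 0 < rho / 2 by rewrite divr_gt0.
  have FA : (y @ \oo) [set y j | j in [set j | (N <= j)%N]].
    by exists N => // j /= Nj; exists j.
  have [x [[j Nj <-] bx]] := clp _ _ FA (nbhsx_ballx p (rho/2) r2).
  by exists j.
have [j0 [_ b0]] := Hc 0%N.
have [j1 [l1 b1]] := Hc j0.+1.
exists j0, j1; split => // i.
have := ball_rV b0 i; have := ball_rV b1 i.
rewrite -[y j0 0 i - y j1 0 i](subrKA (p 0 i)).
move=> h1 h0; apply: le_lt_trans (ler_normD _ _) _.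
rewrite distrC in h0; lra.
Qed.

Lemma near_id (R : realType) n (ip : 'rV[R]_n -> 'rV[R]_n -> R)
  (g : R -> 'M[R]_n) (f : R -> R) (v z : 'rV[R]_n) b :
  is_inner_product ip ->
  (forall x y, 0 <= x -> 0 <= y -> g (x + y) = g x *m g y) ->
  (forall x, 0 <= x -> forall u, ipnorm ip (u *m g x) <= f x * ipnorm ip u) ->
  locally_bounded0 f -> 0 < b -> z *m g b = v ->
  forall eta, 0 < eta -> exists h, 0 < h < b /\ ipnorm ip (v *m g h - v) <= eta.
Proof.
move=> Hip Hg Hf lb b0 zv eta eta0.
have [M HM] := lb b (ltW b0).
have fM x : 0 <= x <= b -> f x <= M.
  by move=> /HM; rewrite ler_norml => /andP[].
have M0 : 0 <= M by apply: le_trans (HM 0 _); rewrite ?normr_ge0 // lexx ltW.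
have [c [c0 Hc]] := coord_bound Hip.
set K := \sum_i ipnorm ip ('e_i : 'rV[R]_n).
have K0 : 0 <= K by apply: sumr_ge0 => i _; exact: ipnorm_ge0.
pose s (j : nat) := b / (j.+2)%:R.
have s0 j : 0 < s j by rewrite divr_gt0.
have sb j : s j < b.
  rewrite /s ltr_pdivrMr // ltr_pMr // ltr1n //.
have sdec j0 j1 : (j0 < j1)%N -> s j1 < s j0.
  move=> lt; rewrite /s ltr_pM2l //.
  by rewrite ltf_pV2 ?posrE ?ltr0n // ltr_nat ltnS.
pose y j := z *m g (s j).
pose rho := eta / (M * K + 1).
have MK1 : 0 < M * K + 1 by rewrite ltr_wpDl // mulr_ge0.
have rho0 : 0 < rho by rewrite divr_gt0.
have ybd j i : `|y j 0 i| <= c * (M * ipnorm ip z).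
  apply: le_trans (Hc (y j) i) _; apply: ler_wpM2l => //.
  apply: le_trans (Hf _ (ltW (s0 j)) z) _; apply: ler_wpM2r; first exact: ipnorm_ge0.
  by apply: fM; rewrite (ltW (s0 j)) (ltW (sb j)).
have [j0 [j1 [lt01 Hy]]] := compact_pair rho0 ybd.
set h := s j0 - s j1.
have h0 : 0 < h by rewrite subr_gt0 sdec.
have hb : h < b by have := sb j0; have := s0 j1; rewrite /h; lra.
exists h; split; first by rewrite h0 hb.
have E : v *m g h - v = (y j0 - y j1) *m g (b - s j1).
  have e1 : 0 <= b - s j1 by rewrite subr_ge0 ltW.
  rewrite mulmxBl /y -!mulmxA -!Hg ?(ltW (s0 _)) // -zv -mulmxA -Hg ?ltW //.
  by congr (_ *m g _ - _ *m g _); rewrite /h; ring.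
rewrite E; apply: le_trans (Hf _ _ _) _; first by rewrite subr_ge0 ltW.
apply: le_trans (_ : M * ipnorm ip (y j0 - y j1) <= _).
  apply: ler_wpM2r; first exact: ipnorm_ge0.
  by apply: fM; rewrite subr_ge0 ltW //= gerBl ltW.
apply: le_trans (ler_wpM2l M0 (ipnorm_coord Hip (r := rho) _)) _.
  by move=> i; have := Hy i; rewrite !mxE => H; apply: ltW.
have -> : M * (rho * K) = eta * ((M * K) / (M * K + 1)).
  by rewrite /rho; field; rewrite gt_eqF.
apply: ler_piMr; first exact: ltW.
by rewrite ler_pdivrMr // mul1r lerDl.
Qed.

Local Close Scope classical_set_scope.
Lemma rc (R : realType) (f : R -> R) : (f x @[x --> 0^'+] --> f 0)%classic ->
  forall eps, 0 < eps -> exists2 d, 0 < d & forall x, 0 < x < d -> `|f 0 - f x| < eps.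
Proof.
move=> /cvgrPdist_lt H eps e0; have := H _ e0.
move=> /nbhs_ballP[d d0 Hd]; exists d => // x /andP[x0 xd].
apply: Hd => //=; rewrite /ball /= sub0r normrN gtr0_norm //.
Qed.

Lemma le_eps (R : realType) (a N : R) : 0 <= N ->
  (forall eps, 0 < eps -> a <= (1 + eps) * N + eps) -> a <= N.
Proof.
move=> N0 H; rewrite leNgt; apply/negP => aN.
have e0 : 0 < (a - N) / (N + 2) by rewrite divr_gt0 // ?subr_gt0 // ltr_wpDl.
have := H _ e0.
have -> : (1 + (a - N) / (N + 2)) * N + (a - N) / (N + 2) =
          N + (a - N) * ((N + 1) / (N + 2)).
  field; rewrite gt_eqF // ltr_wpDl //.
have : (N + 1) / (N + 2) < 1 by rewrite ltr_pdivrMr ?ltr_wpDl // mul1r ltrD2l ltr1n.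
have : 0 < a - N by rewrite subr_gt0.
move=> p q; have := ltr_pM2l p; move=> /(_ ((N + 1) / (N + 2)) 1); rewrite q mulr1.
move=> /esym r; lra.
Qed.

Unset Implicit Arguments. Set Strict Implicit.
Theorem mainTheorem12 (R : realType) (n : nat)
  (ip : 'rV[R]_n -> 'rV[R]_n -> R) (g : R -> 'M[R]_n) (V1 V2 : 'M[R]_n) :
  is_inner_product ip ->
  is_semigroup g ->
  boundedness_assumption ip g ->
  (V1 + V2 == (1%:M : 'M[R]_n))%MS ->
  (V1 :&: V2 == (0 : 'M[R]_n))%MS ->
  (forall x, 0 <= x -> stablemx V1 (g x)) ->
  (forall x, 0 <= x -> stablemx V2 (g x)) ->
  (forall x, 0 <= x ->
     (forall v : 'rV[R]_n, (v <= V1)%MS -> v *m g x = 0 -> v = 0) /\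
     (forall w : 'rV[R]_n, (w <= V1)%MS ->
        exists2 v : 'rV[R]_n, (v <= V1)%MS & v *m g x = w)) ->
  (forall x, 0 < x -> forall v : 'rV[R]_n, (v <= V2)%MS -> v *m g x = 0) ->
  forall v w : 'rV[R]_n, (v <= V1)%MS -> (w <= V2)%MS -> ip v w = 0.
Proof.
move=> Hip [g0 Hg] [f [lb fc f01 Hop]] _ _ _ _ Hinv Hker v w vV1 wV2.
have Hf x : 0 <= x -> forall u, ipnorm ip (u *m g x) <= f x * ipnorm ip u.
  move=> x0 u; apply: le_trans (op_bound Hip _ _) _.
  apply: ler_wpM2r; [exact: ipnorm_ge0 | exact: Hop].
have step1 t : ipnorm ip v <= ipnorm ip (v + t *: w).
  apply: le_eps; first exact: ipnorm_ge0.
  move=> eps e0.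
  have [d d0 Hd] := rc fc e0.
  have b0 : 0 < d / 2 by rewrite divr_gt0.
  have [_ /(_ v vV1) [z _ zv]] := Hinv (d / 2) (ltW b0).
  have [h [/andP[h0 hb] Hh]] := near_id Hip Hg Hf lb b0 zv e0.
  have fh : f h <= 1 + eps.
    have := Hd h; rewrite h0 /= f01 => /(_ (lt_trans hb _)).
    have -> : d / 2 < d by rewrite ltr_pdivrMr // ltr_pMr // ltr1n.
    by move=> /(_ isT); rewrite distrC => H; have := ler_norm (f h - 1); lra.
  have E : v *m g h = (v + t *: w) *m g h.
    by rewrite mulmxDl (Hker h h0 (t *: w)) ?addr0 // scalemx_sub.
  have ev : v = v *m g h - (v *m g h - v) by rewrite opprB addrC subrK.
  rewrite {1}ev.
  apply: le_trans (ipnormD Hip _ _) _; rewrite ipnormN // {1}E.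
  apply: lerD => //; apply: le_trans (Hf _ (ltW h0) _) _.
  by apply: ler_wpM2r => //; exact: ipnorm_ge0.
have [S _ P _] := Hip.
pose a := ip v w; pose q := ip w w.
pose t := - a / (q + 1).
have q0 : 0 <= q by exact: P.
have ht : a = - (t * (q + 1)) by rewrite /t; field; rewrite gt_eqF // ltr_wpDl.
have := step1 t.
rewrite -(@ler_pXn2r _ 2) ?nnegrE ?ipnorm_ge0 // !ipnorm_sq //.
rewrite ipDl // !ipDr // !ipZl // !ipZr // (S w v) -/a -/q => H.
have t2 : t ^+ 2 * (q + 2) <= 0.
  rewrite ht in H; nra.
have tt : t ^+ 2 <= 0.
  by move: t2; rewrite pmulr_lle0 // ltr_wpDl.
have t0 : t = 0.
  by apply/eqP; rewrite -sqrf_eq0 eq_le tt sqr_ge0.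
by rewrite -/a ht t0 mul0r oppr0.
Qed.
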